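(* Let $A$ be a finite-dimensional commutative Frobenius algebra over a field with $\dim(A)>1$. Suppose $K$ and $L$ are arrows of $\mathbf{2Cob}$ with $K\neq L$ (as arrows of $\mathbf{2Cob}$) but $F_AK=F_AL$ (as linear maps, in particular with equal domain and codomain). Then there exist integers $n,m\ge 0$, $k_1\ge\dots\ge k_n\ge 0$ and $l_1\ge\dots\ge l_m\ge 0$ with $(k_1,\dots,k_n)\neq(l_1,\dots,l_m)$ such that \[ \bigotimes_{i=1}^n E_{0,k_i,0}=_A\bigotimes_{j=1}^m E_{0,l_j,0} \] (an empty tensor product denoting the empty cobordism $\mathbf{0}\to\mathbf{0}$).
   Context: $\mathbf{2Cob}$ is the category whose objects are $\mathbf{0},\mathbf{1},\mathbf{2},\dots$ ($\mathbf{n}$ being a sequence of $n$ oriented circles) and whose arrows $\mathbf{n}\to\mathbf{m}$ are diffeomorphism classes (rel boundary) of oriented 2-cobordisms with $n$ ingoing and $m$ outgoing boundary circles; it is symmetric monoidal with $\otimes$ given by disjoint union placed side by side. For $m,k,n\ge 0$, $E_{m,k,n}$ denotes the connected 2-cobordism of genus $k$ with $n$ ingoing and $m$ outgoing boundary circles; thus $E_{0,k,0}$ is the closed connected orientable surface of genus $k$ viewed as a cobordism $\mathbf{0}\to\mathbf{0}$. For a commutative Frobenius algebra $(A,\mu,\eta,\delta,\varepsilon)$, $F_A$ denotes the symmetric strong monoidal functor $\mathbf{2Cob}\to\mathbf{Vect}$ with $F_A\mathbf{1}=A$ and $F_A(E_{1,0,2})=\mu$, $F_A(E_{1,0,0})=\eta$,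 $F_A(E_{2,0,1})=\delta$, $F_A(E_{0,0,1})=\varepsilon$. One writes $K=_A L$ if $F_AK=F_AL$. *)

(* Defs.v *)
From HB Require Import structures.
From mathcomp Require Import all_boot all_order all_algebra.
Set Implicit Arguments. Unset Strict Implicit. Unset Printing Implicit Defensive.
Import Order.TTheory GRing.Theory Num.Theory.
Local Open Scope ring_scope.

(* A = F^d with basis e_0..e_(d-1);                                          *)
(*   e_i * e_j        = \sum_k fmu i j k e_k          (multiplication mu)    *)
(*   1                = \sum_k feta k e_k             (unit eta)             *)
(*   delta e_i        = \sum_(j,k) fdelta i j k e_j (x) e_k  (comultipl.)    *)
(*   eps e_i          = feps i                        (counit)               *)
(*   delta o mu = (mu (x) 1) o (1 (x) delta) = (1 (x) mu) o (delta (x) 1).   *)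
Record frob (F : fieldType) (d : nat) := Frob {
  fmu : 'I_d -> 'I_d -> 'I_d -> F;
  feta : 'I_d -> F;
  fdelta : 'I_d -> 'I_d -> 'I_d -> F;
  feps : 'I_d -> F;
  fmu_assoc : forall i j l r,
    \sum_(k < d) fmu i j k * fmu k l r = \sum_(k < d) fmu j l k * fmu i k r;
  fmu_comm : forall i j k, fmu i j k = fmu j i k;
  fmu_unit : forall j k, \sum_(i < d) feta i * fmu i j k = (j == k)%:R;
  fdelta_coassoc : forall i a b c,
    \sum_(j < d) fdelta i j c * fdelta j a b
    = \sum_(k < d) fdelta i a k * fdelta k b c;
  fdelta_counitl : forall i k, \sum_(j < d) fdelta i j k * feps j = (i == k)%:R;
  fdelta_counitr : forall i j, \sum_(k < d) fdelta i j k * feps k = (i == j)%:R;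
  frobenius_l : forall i j a b,
    \sum_(k < d) fmu i j k * fdelta k a b = \sum_(p < d) fdelta j p b * fmu i p a;
  frobenius_r : forall i j a b,
    \sum_(k < d) fmu i j k * fdelta k a b = \sum_(p < d) fdelta i a p * fmu p j b
}.

Section FA.
Variables (F : fieldType) (d : nat) (A : frob F d).

(* n-fold multiplication A^(x)n -> A (eta for n = 0): coefficient at e_k of
   the product e_(x_1) ... e_(x_n). *)
Fixpoint mun (x : seq 'I_d) (k : 'I_d) : F :=
  match x with
  | [::] => feta A k
  | i :: s => \sum_(p < d) mun s p * fmu A i p k
  end.

(* m-fold comultiplication A -> A^(x)m (eps for m = 0): coefficient of
   e_(y_1) (x) ... (x) e_(y_m) in the image of e_i. *)
Fixpoint deltam (i : 'I_d) (y : seq 'I_d) : F :=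
  match y with
  | [::] => feps A i
  | a :: s => \sum_(p < d) fdelta A i a p * deltam p s
  end.

Definition handle (i k : 'I_d) : F :=
  \sum_(a < d) \sum_(b < d) fdelta A i a b * fmu A a b k.

Fixpoint handlepow (g : nat) (p q : 'I_d) : F :=
  match g with
  | 0 => (p == q)%:R
  | g'.+1 => \sum_(r < d) handlepow g' p r * handle r q
  end.

(* F_A(E_{m,g,n}) = delta^(m) o (mu o delta)^g o mu^(n):
   matrix coefficient from input basis tensor x to output basis tensor y. *)
Definition conn (x : seq 'I_d) (g : nat) (y : seq 'I_d) : F :=
  \sum_(p < d) \sum_(q < d) mun x p * handlepow g p q * deltam q y.

End FA.

(* Arrows n -> m of 2Cob, via the classification of oriented surfaces:      *)
(* a cobordism is determined up to diffeomorphism rel boundary by           *)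
(*  - the partition of the n + m boundary circles (inputs 0..n-1 are         *)
(*    lshift, outputs are rshift in 'I_(n+m)) into connected components,     *)
(*    given by block labels cblk,                                            *)
(*  - the genus of each such component (cgen applied to the block label),   *)
(*  - the multiset of genera of the closed components (cclosed).            *)
(* Two representatives denote the same arrow iff cob_same holds.            *)
Record cob (n m : nat) := Cob {
  cblk : 'I_(n + m) -> 'I_(n + m);
  cgen : 'I_(n + m) -> nat;
  cclosed : seq nat
}.

Definition cob_same n m (K L : cob n m) : Prop :=
  [/\ forall i j : 'I_(n + m), (cblk K i == cblk K j) = (cblk L i == cblk L j),
      forall i : 'I_(n + m), cgen K (cblk K i) = cgen L (cblk L i)
    & perm_eq (cclosed K) (cclosed L)].

(* The functor F_A on arrows: matrix coefficient of F_A K at input basis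
   tensor e_x (x : n.-tuple) and output basis tensor e_y (y : m.-tuple):
   product of the values of the connected components. *)
Definition FA (F : fieldType) (d : nat) (A : frob F d) n m (K : cob n m)
    (x : n.-tuple 'I_d) (y : m.-tuple 'I_d) : F :=
  (\prod_(g <- cclosed K) conn A [::] g [::]) *
  \prod_(r <- undup [seq cblk K i | i <- enum 'I_(n + m)])
     conn A [seq tnth x i | i <- enum 'I_n & cblk K (lshift m i) == r]
            (cgen K r)
            [seq tnth y j | j <- enum 'I_m & cblk K (rshift n j) == r].

Definition FA_eq (F : fieldType) (d : nat) (A : frob F d) n m (K L : cob n m) : Prop :=
  forall x y, FA A K x y = FA A L x y.

(* the tensor product E_{0,k_1,0} (x) ... (x) E_{0,k_n,0} : 0 -> 0 *)
Definition closed_cob (ks : seq nat) : cob 0 0 :=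
  @Cob 0 0 (fun i => i) (fun _ => 0%N) ks.

(* Main.v *)
Require Import Defs.
From HB Require Import structures.
From mathcomp Require Import all_boot all_order all_algebra.
From mathcomp Require Import ring zify.
Set Implicit Arguments. Unset Strict Implicit. Unset Printing Implicit Defensive.
Import Order.TTheory GRing.Theory Num.Theory.

Lemma bits_bound (f : nat -> bool) K : \sum_(k < K) f k * 2 ^ k < 2 ^ K.
Proof.
elim: K => [|K IH]; first by rewrite big_ord0.
rewrite big_ord_recr /= expnS.
have H : f K * 2 ^ K <= 2 ^ K by case: (f K); rewrite ?mul1n ?mul0n.
rewrite mul2n -addnn.
apply: (@leq_trans (f K * 2 ^ K + 2 ^ K)); first by rewrite addnC ltn_add2l.
by rewrite leq_add2r.
Qed.

Lemma bits (f : nat -> bool) K i : i < K ->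
  odd ((\sum_(k < K) f k * 2 ^ k) %/ 2 ^ i) = f i.
Proof.
elim: K => [//|K IH] iK.
rewrite big_ord_recr /=.
have [lt_iK|geKi] := ltnP i K; last first.
  have -> : i = K by apply/eqP; rewrite eqn_leq geKi -ltnS iK.
  rewrite addnC divnMDl ?expn_gt0 // divn_small ?bits_bound // addn0.
  by case: (f K).
have ->: f K * 2 ^ K = (f K * 2 ^ (K - i)) * 2 ^ i.
  by rewrite -mulnA -expnD subnK // ltnW.
rewrite divnDr ?dvdn_mull // mulnK ?expn_gt0 // oddD IH // oddM oddX.
have -> : (K - i == 0) = false by apply/negbTE; rewrite subn_eq0 -ltnNge.
by rewrite /= andbF addbF.
Qed.

Local Open Scope ring_scope.

Section Alg.
Variables (F : fieldType) (d : nat) (A : frob F d).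

Local Notation hp := (handlepow A).
Local Notation h := (handle A).

Definition HM g : 'M[F]_d := \matrix_(i, j) hp g i j.
Definition HH : 'M[F]_d := \matrix_(i, j) h i j.

Lemma HM0 : HM 0 = 1%:M.
Proof. by apply/matrixP => i j; rewrite !mxE. Qed.

Lemma HMS g : HM g.+1 = HM g *m HH.
Proof. by apply/matrixP => i j; rewrite !mxE; apply: eq_bigr => k _; rewrite !mxE. Qed.

Lemma HMD a g : HM (a + g) = HM a *m HM g.
Proof.
elim: g => [|g IH]; first by rewrite addn0 HM0 mulmx1.
by rewrite addnS !HMS IH mulmxA.
Qed.

Lemma hp_add a g p q : hp (a + g) p q = \sum_r hp a p r * hp g r q.
Proof.
have /matrixP/(_ p q) := HMD a g; rewrite !mxE => ->.
by apply: eq_bigr => r _; rewrite !mxE.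
Qed.

Lemma hp1 p q : hp 1 p q = h p q.
Proof.
rewrite /= (bigD1 p) //= eqxx mul1r big1 ?addr0 // => r /negbTE.
by rewrite eq_sym => ->; rewrite mul0r.
Qed.

Lemma swap3 (f : 'I_d -> 'I_d -> 'I_d -> F) :
  \sum_p \sum_a \sum_b f p a b = \sum_a \sum_b \sum_p f p a b.
Proof. rewrite exchange_big; apply: eq_bigr => a _; exact: exchange_big. Qed.

Lemma xch (I J : finType) (f : I -> J -> F) : \sum_i \sum_j f i j = \sum_j \sum_i f i j.
Proof. exact: exchange_big. Qed.

Lemma H1 i q k :
  \sum_p h i p * fmu A p q k = \sum_r fmu A i q r * h r k.
Proof.
rewrite /handle.
transitivity (\sum_p \sum_a \sum_b fdelta A i a b * (fmu A a b p * fmu A p q k)).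
  apply: eq_bigr => p _; rewrite big_distrl; apply: eq_bigr => a _.
  rewrite big_distrl; apply: eq_bigr => b _; by rewrite mulrA.
rewrite swap3.
transitivity (\sum_a \sum_b \sum_p fdelta A i a b * (fmu A b q p * fmu A a p k)).
  apply: eq_bigr => a _; apply: eq_bigr => b _.
  by rewrite -!big_distrr /= fmu_assoc.
symmetry.
transitivity (\sum_r \sum_a \sum_b (fmu A i q r * fdelta A r a b) * fmu A a b k).
  apply: eq_bigr => r _; rewrite big_distrr; apply: eq_bigr => a _.
  rewrite big_distrr; apply: eq_bigr => b _; exact: mulrA.
rewrite swap3.
transitivity (\sum_a \sum_b \sum_p (fdelta A i a p * fmu A p q b) * fmu A a b k).
  apply: eq_bigr => a _; apply: eq_bigr => b _.
  by rewrite -!big_distrl /= frobenius_r.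
apply: eq_bigr => a _.
rewrite exchange_big; apply: eq_bigr => b _; apply: eq_bigr => p _.
by rewrite -!mulrA.
Qed.

Lemma DH i s p :
  \sum_q h q s * fdelta A i q p = \sum_r h i r * fdelta A r s p.
Proof.
rewrite /handle.
symmetry.
transitivity (\sum_r \sum_a \sum_b fdelta A i a b * (fmu A a b r * fdelta A r s p)).
  apply: eq_bigr => r _; rewrite big_distrl; apply: eq_bigr => a _.
  rewrite big_distrl; apply: eq_bigr => b _; by rewrite mulrA.
rewrite swap3.
transitivity (\sum_a \sum_b \sum_t fdelta A i a b * (fdelta A b t p * fmu A a t s)).
  apply: eq_bigr => a _; apply: eq_bigr => b _.
  by rewrite -!big_distrr /= frobenius_l.
transitivity (\sum_a \sum_t \sum_b (fdelta A i a b * fdelta A b t p) * fmu A a t s).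
  apply: eq_bigr => a _; rewrite exchange_big; apply: eq_bigr => t _.
  apply: eq_bigr => b _; by rewrite mulrA.
transitivity (\sum_a \sum_t \sum_j (fdelta A i j p * fdelta A j a t) * fmu A a t s).
  apply: eq_bigr => a _; apply: eq_bigr => t _.
  by rewrite -!big_distrl /= fdelta_coassoc.
rewrite -swap3.
apply: eq_bigr => j _; rewrite mulrC big_distrr; apply: eq_bigr => a _.
rewrite big_distrr; apply: eq_bigr => t _.
by rewrite /= mulrA.
Qed.

Lemma hpS' b i p : hp b.+1 i p = \sum_r h i r * hp b r p.
Proof. by rewrite -add1n hp_add; apply: eq_bigr => r _; rewrite hp1. Qed.

Definition uu a (p : 'I_d) := \sum_r feta A r * hp a r p.
Definition vv b (q : 'I_d) := \sum_r hp b q r * feps A r.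

Lemma uu0 p : uu 0 p = feta A p.
Proof.
rewrite /uu (bigD1 p) //= eqxx mulr1 big1 ?addr0 // => r /negbTE ->.
by rewrite mulr0.
Qed.

Lemma vv0 q : vv 0 q = feps A q.
Proof.
rewrite /vv (bigD1 q) //= eqxx mul1r big1 ?addr0 // => r.
by rewrite eq_sym => /negbTE ->; rewrite mul0r.
Qed.

Lemma uuS a p : uu a.+1 p = \sum_s uu a s * h s p.
Proof.
rewrite /uu /=.
transitivity (\sum_r \sum_s feta A r * hp a r s * h s p).
  by apply: eq_bigr => r _; rewrite mulr_sumr; apply: eq_bigr => s _; rewrite /= mulrA.
rewrite xch; apply: eq_bigr => s _; rewrite mulr_suml; done.
Qed.

Lemma vvS b q : vv b.+1 q = \sum_s h q s * vv b s.
Proof.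
rewrite /vv -add1n.
transitivity (\sum_r \sum_s h q s * hp b s r * feps A r).
  apply: eq_bigr => r _; rewrite hp_add mulr_suml; apply: eq_bigr => s _.
  by rewrite hp1.
rewrite xch; apply: eq_bigr => s _; rewrite mulr_sumr; apply: eq_bigr => r _.
by rewrite /= mulrA.
Qed.

Lemma U_mul a q k : \sum_p uu a p * fmu A p q k = hp a q k.
Proof.
elim: a q k => [|a IH] q k.
  by under eq_bigr do rewrite uu0; rewrite fmu_unit.
under eq_bigr do rewrite uuS mulr_suml.
rewrite xch /=.
transitivity (\sum_s uu a s * \sum_p h s p * fmu A p q k).
  by apply: eq_bigr => s _; rewrite mulr_sumr; apply: eq_bigr => p _; rewrite /= mulrA.
transitivity (\sum_s \sum_r uu a s * (fmu A s q r * h r k)).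
  by apply: eq_bigr => s _; rewrite H1 mulr_sumr.
rewrite xch; apply: eq_bigr => r _.
rewrite -IH mulr_suml; apply: eq_bigr => s _; by rewrite /= mulrA.
Qed.

Lemma V_del b i p : \sum_q vv b q * fdelta A i q p = hp b i p.
Proof.
elim: b i p => [|b IH] i p.
  by under eq_bigr do rewrite vv0 mulrC; rewrite fdelta_counitl.
under eq_bigr do rewrite vvS mulr_suml.
rewrite xch /=.
transitivity (\sum_s vv b s * \sum_q h q s * fdelta A i q p).
  apply: eq_bigr => s _; rewrite mulr_sumr; apply: eq_bigr => q _.
  by ring.
transitivity (\sum_s \sum_r vv b s * (h i r * fdelta A r s p)).
  by apply: eq_bigr => s _; rewrite DH mulr_sumr.
rewrite xch (_ : \sum_(r<d) hp b i r * h r p = hp b.+1 i p) // hpS'.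
apply: eq_bigr => r _.
rewrite -IH mulr_sumr; apply: eq_bigr => s _.
by ring.
Qed.

Lemma conn_in a L g Y :
  \sum_p uu a p * conn A (p :: L) g Y = conn A L (a + g) Y.
Proof.
rewrite /conn /=.
transitivity (\sum_p0 \sum_q0 \sum_q mun A L q * hp a q p0 * hp g p0 q0 * deltam A q0 Y).
  transitivity (\sum_p \sum_p0 \sum_q0 uu a p * ((\sum_p1 mun A L p1 * fmu A p p1 p0) * hp g p0 q0 * deltam A q0 Y)).
    by apply: eq_bigr => p _; rewrite mulr_sumr; apply: eq_bigr => p0 _; rewrite mulr_sumr.
  rewrite swap3; apply: eq_bigr => p0 _; apply: eq_bigr => q0 _.
  transitivity (\sum_p1 \sum_p uu a p * (mun A L p1 * fmu A p p1 p0 * hp g p0 q0 * deltam A q0 Y)).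
    rewrite xch; apply: eq_bigr => p _; rewrite mulr_suml mulr_suml mulr_sumr.
    by apply: eq_bigr => p1 _; ring.
  apply: eq_bigr => p1 _; rewrite -(U_mul a p1 p0) mulr_sumr mulr_suml mulr_suml.
  by apply: eq_bigr => p _; ring.
rewrite swap3 swap3; apply: eq_bigr => q _; rewrite xch; apply: eq_bigr => q0 _.
rewrite hp_add mulr_sumr mulr_suml; apply: eq_bigr => p0 _; ring.
Qed.

Lemma conn_out b X g Y :
  \sum_q vv b q * conn A X g (q :: Y) = conn A X (g + b) Y.
Proof.
rewrite /conn /=.
transitivity (\sum_p0 \sum_q0 \sum_p mun A X p0 * hp g p0 q0 * hp b q0 p * deltam A p Y).
  transitivity (\sum_q \sum_p0 \sum_q0 vv b q * (mun A X p0 * hp g p0 q0 * \sum_p fdelta A q0 q p * deltam A p Y)).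
    by apply: eq_bigr => q _; rewrite mulr_sumr; apply: eq_bigr => p0 _; rewrite mulr_sumr.
  rewrite swap3; apply: eq_bigr => p0 _; apply: eq_bigr => q0 _.
  transitivity (\sum_p \sum_q vv b q * (mun A X p0 * hp g p0 q0 * fdelta A q0 q p * deltam A p Y)).
    rewrite xch; apply: eq_bigr => q _; rewrite !mulr_sumr.
    by apply: eq_bigr => p _; ring.
  apply: eq_bigr => p _; rewrite -(V_del b q0 p) mulr_sumr mulr_suml.
  by apply: eq_bigr => q _; ring.
apply: eq_bigr => p0 _.
rewrite xch; apply: eq_bigr => p _.
rewrite hp_add mulr_sumr mulr_suml; apply: eq_bigr => q0 _; ring.
Qed.

Definition cc g := conn A [::] g [::].


Definition ins (T : eqType) n (x : n.-tuple 'I_d) (b : 'I_n -> T) (r : T) :=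
  [seq tnth x i | i <- enum 'I_n & b i == r].

Lemma ins_cons (T : eqType) n (x : n.-tuple 'I_d) p (b : 'I_n.+1 -> T) r :
  ins [tuple of p :: x] b r =
  if b ord0 == r then p :: ins x (fun i => b (lift ord0 i)) r
  else ins x (fun i => b (lift ord0 i)) r.
Proof.
rewrite /ins enum_ordSl /=.
case: ifP => _ /=; rewrite filter_map -map_comp; congr (_ :: _) || idtac;
  by apply: eq_map => i /=; rewrite tnthS.
Qed.

Lemma ins0 (T : eqType) (x : 0.-tuple 'I_d) (b : 'I_0 -> T) r : ins x b r = [::].
Proof. by rewrite /ins enum_ord0. Qed.

Lemma sum_tupleS n (f : n.+1.-tuple 'I_d -> F) :
  \sum_x f x = \sum_p \sum_(x : n.-tuple 'I_d) f [tuple of p :: x].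
Proof.
rewrite pair_big /=.
rewrite (reindex (fun pr : 'I_d * n.-tuple 'I_d => [tuple of pr.1 :: pr.2])) //=.
exists (fun x : n.+1.-tuple 'I_d => (thead x, [tuple of behead x])) => [[p x] _|x _] /=.
  by congr (_, _); apply: val_inj.
by rewrite [RHS]tuple_eta; apply: val_inj.
Qed.

Lemma sum_tuple0 (f : 0.-tuple 'I_d -> F) : \sum_x f x = f [tuple].
Proof. by rewrite (big_pred1 [tuple]) // => x; apply/esym/eqP; exact: tuple0. Qed.

Lemma in_all (T : eqType) (R : seq T) (YS : T -> seq 'I_d) : uniq R ->
  forall n (bi : 'I_n -> T) (W : 'I_n -> nat) (gen : T -> nat),
  (forall i, bi i \in R) ->
  \sum_(x : n.-tuple 'I_d) (\prod_(i < n) uu (W i) (tnth x i)) *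
     \prod_(r <- R) conn A (ins x bi r) (gen r) (YS r)
  = \prod_(r <- R) conn A [::] (gen r + \sum_(i < n | bi i == r) W i)%N (YS r).
Proof.
move=> uR; elim=> [|n IH] bi W gen biR.
  rewrite sum_tuple0 big_ord0 mul1r; apply: eq_bigr => r _.
  by rewrite ins0 big_ord0 addn0.
set r0 := bi ord0.
set gen' := fun r => if r == r0 then (W ord0 + gen r)%N else gen r.
have -> : \prod_(r <- R) conn A [::] (gen r + \sum_(i < n.+1 | bi i == r) W i)%N (YS r)
   = \prod_(r <- R) conn A [::] (gen' r + \sum_(i < n | bi (lift ord0 i) == r) W (lift ord0 i))%N (YS r).
  apply: eq_bigr => r _; congr conn.
  rewrite big_mkcond big_ord_recl /= -big_mkcond /gen' /r0 eq_sym.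
  by case: ifP => _; rewrite ?add0n // addnCA addnA.
rewrite -(IH _ _ gen') // sum_tupleS xch; apply: eq_bigr => x _.
set U' := \prod_(i < n) uu (W (lift ord0 i)) (tnth x i).
set L := ins x (fun i : 'I_n => bi (lift ord0 i)) r0.
set Rest := \prod_(r <- R | r != r0) conn A (ins x (fun i : 'I_n => bi (lift ord0 i)) r) (gen r) (YS r).
transitivity (\sum_p (U' * Rest) * (uu (W ord0) p * conn A (p :: L) (gen r0) (YS r0))).
  apply: eq_bigr => p _.
  rewrite big_ord_recl (bigD1_seq r0) ?biR //= ins_cons eqxx.
  have -> : \prod_(i < n) uu (W (lift ord0 i)) (tnth [tuple of p :: x] (lift ord0 i)) = U'.
    by apply: eq_bigr => i _; rewrite tnthS.
  have -> : \prod_(i <- R | i != r0) conn A (ins [tuple of p :: x] bi i) (gen i) (YS i) = Rest.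
    apply: eq_bigr => r /negbTE nr; rewrite ins_cons.
    by rewrite /r0 in nr *; rewrite eq_sym nr.
  rewrite /= -/r0 /L; ring.
rewrite -mulr_sumr conn_in.
rewrite [in RHS](bigD1_seq r0) ?biR //= /gen' eqxx /Rest.
rewrite -mulrA; congr (_ * _); rewrite mulrC; congr (_ * _).
by apply: eq_bigr => r /negbTE ->.
Qed.

Lemma out_all (T : eqType) (R : seq T) (XS : T -> seq 'I_d) : uniq R ->
  forall n (bi : 'I_n -> T) (W : 'I_n -> nat) (gen : T -> nat),
  (forall i, bi i \in R) ->
  \sum_(x : n.-tuple 'I_d) (\prod_(i < n) vv (W i) (tnth x i)) *
     \prod_(r <- R) conn A (XS r) (gen r) (ins x bi r)
  = \prod_(r <- R) conn A (XS r) (gen r + \sum_(i < n | bi i == r) W i)%N [::].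
Proof.
move=> uR; elim=> [|n IH] bi W gen biR.
  rewrite sum_tuple0 big_ord0 mul1r; apply: eq_bigr => r _.
  by rewrite ins0 big_ord0 addn0.
set r0 := bi ord0.
set gen' := fun r => if r == r0 then (gen r + W ord0)%N else gen r.
have -> : \prod_(r <- R) conn A (XS r) (gen r + \sum_(i < n.+1 | bi i == r) W i)%N [::]
   = \prod_(r <- R) conn A (XS r) (gen' r + \sum_(i < n | bi (lift ord0 i) == r) W (lift ord0 i))%N [::].
  apply: eq_bigr => r _; congr conn.
  rewrite big_mkcond big_ord_recl /= -big_mkcond /gen' /r0 eq_sym.
  by case: ifP => _; rewrite ?add0n // addnA.
rewrite -(IH _ _ gen') // sum_tupleS xch; apply: eq_bigr => x _.
set U' := \prod_(i < n) vv (W (lift ord0 i)) (tnth x i).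
set L := ins x (fun i : 'I_n => bi (lift ord0 i)) r0.
set Rest := \prod_(r <- R | r != r0) conn A (XS r) (gen r) (ins x (fun i : 'I_n => bi (lift ord0 i)) r).
transitivity (\sum_p (U' * Rest) * (vv (W ord0) p * conn A (XS r0) (gen r0) (p :: L))).
  apply: eq_bigr => p _.
  rewrite big_ord_recl (bigD1_seq r0) ?biR //= ins_cons eqxx.
  have -> : \prod_(i < n) vv (W (lift ord0 i)) (tnth [tuple of p :: x] (lift ord0 i)) = U'.
    by apply: eq_bigr => i _; rewrite tnthS.
  have -> : \prod_(i <- R | i != r0) conn A (XS i) (gen i) (ins [tuple of p :: x] bi i) = Rest.
    apply: eq_bigr => r /negbTE nr; rewrite ins_cons.
    by rewrite /r0 in nr *; rewrite eq_sym nr.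
  rewrite /= -/r0 /L; ring.
rewrite -mulr_sumr conn_out.
rewrite [in RHS](bigD1_seq r0) ?biR //= /gen' eqxx /Rest.
rewrite -mulrA; congr (_ * _); rewrite mulrC; congr (_ * _).
by apply: eq_bigr => r /negbTE ->.
Qed.


End Alg.

Section Main.
Variables (F : fieldType) (d : nat) (A : frob F d).

Definition Rb n m (K : cob n m) := undup [seq cblk K i | i <- enum 'I_(n+m)].
Definition MS n m (K : cob n m) (w : 'I_(n+m) -> nat) :=
  cclosed K ++ [seq (cgen K r + \sum_(k | cblk K k == r) w k)%N | r <- Rb K].

Lemma FAE n m (K : cob n m) x y :
  FA A K x y = (\prod_(g <- cclosed K) cc A g) *
    \prod_(r <- Rb K) conn A (ins x (fun i => cblk K (lshift m i)) r) (cgen K r)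
                          (ins y (fun j => cblk K (rshift n j)) r).
Proof. by []. Qed.

Lemma contract n m (K : cob n m) (w : 'I_(n+m) -> nat) :
  \sum_(x : n.-tuple 'I_d) \sum_(y : m.-tuple 'I_d)
    ((\prod_(i < n) uu A (w (lshift m i)) (tnth x i)) *
     (\prod_(j < m) vv A (w (rshift n j)) (tnth y j))) * FA A K x y
  = \prod_(g <- MS K w) cc A g.
Proof.
have Rin k : cblk K k \in Rb K by rewrite mem_undup map_f ?mem_enum.
have uR : uniq (Rb K) by exact: undup_uniq.
rewrite /MS big_cat big_map /=.
set C := \prod_(g <- cclosed K) cc A g.
set bi := fun i => cblk K (lshift m i).
set bo := fun j => cblk K (rshift n j).
transitivity (C * \sum_(y : m.-tuple 'I_d) (\prod_(j < m) vv A (w (rshift n j)) (tnth y j)) *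
   \sum_(x : n.-tuple 'I_d) (\prod_(i < n) uu A (w (lshift m i)) (tnth x i)) *
      \prod_(r <- Rb K) conn A (ins x bi r) (cgen K r) (ins y bo r)).
  rewrite xch mulr_sumr; apply: eq_bigr => y _.
  rewrite mulr_sumr mulr_sumr; apply: eq_bigr => x _.
  rewrite FAE -/C; ring.
congr (C * _).
transitivity (\sum_(y : m.-tuple 'I_d) (\prod_(j < m) vv A (w (rshift n j)) (tnth y j)) *
   \prod_(r <- Rb K) conn A [::] (cgen K r + \sum_(i < n | bi i == r) w (lshift m i))%N (ins y bo r)).
  apply: eq_bigr => y _; congr (_ * _).
  exact: (in_all (bi := bi) A (fun r => ins y bo r) uR (fun i => w (lshift m i)) (cgen K) (fun i => Rin _)).
rewrite (out_all (bi := bo) A (fun _ => [::]) uR (fun j => w (rshift n j)) _ (fun j => Rin _)).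
apply: eq_bigr => r _; congr (conn A [::] _ [::]).
by rewrite [in RHS]big_split_ord /= addnA.
Qed.

End Main.

Section Decode.
Local Open Scope nat_scope.
Variables (n m : nat) (N : nat).
Let w := fun k : 'I_(n+m) => (N * 2 ^ k)%N.

Definition mask (K : cob n m) r := (\sum_(k | cblk K k == r) 2 ^ k)%N.

Lemma mask_bit (K : cob n m) r (i : 'I_(n+m)) :
  odd (mask K r %/ 2 ^ i) = (cblk K i == r).
Proof.
pose f k := if (insub k : option 'I_(n+m)) is Some o then cblk K o == r else false.
have -> : mask K r = (\sum_(k < n + m) f k * 2 ^ k)%N.
  rewrite /mask big_mkcond; apply: eq_bigr => k _.
  by rewrite /f valK; case: (cblk K k == r); rewrite ?mul1n ?mul0n.
by rewrite bits // /f valK.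
Qed.

Variable K : cob n m.
Hypothesis hb1 : forall g, g \in cclosed K -> (g < N)%N.
Hypothesis hb2 : forall k, (cgen K (cblk K k) < N)%N.

Lemma valE r : (cgen K r + \sum_(k | cblk K k == r) w k)%N = (cgen K r + N * mask K r)%N.
Proof. by rewrite /mask big_distrr. Qed.

Lemma Rb_ex r : r \in Rb K -> exists k, r = cblk K k.
Proof. by rewrite mem_undup => /mapP [k _ ->]; exists k. Qed.

Lemma val_ge r : r \in Rb K -> (N <= cgen K r + N * mask K r)%N.
Proof.
move=> /Rb_ex [k ->].
have mpos : (0 < mask K (cblk K k))%N.
  have := mask_bit K (cblk K k) k; rewrite eqxx.
  by case: (mask K (cblk K k)) => // ; rewrite div0n.
by apply: leq_trans (leq_addl _ _); rewrite leq_pmulr.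
Qed.

Lemma hasMS (P : pred nat) :
  has (fun t => (N <= t)%N && P t) (MS K w) =
  has (fun r => P (cgen K r + N * mask K r)%N) (Rb K).
Proof.
rewrite has_cat has_map.
have -> : has (fun t => (N <= t)%N && P t) (cclosed K) = false.
  apply/hasP => -[t /hb1]; by rewrite ltnNge => /negbTE ->.
apply: eq_in_has => r rR /=.
by rewrite valE val_ge.
Qed.

Lemma val_div r : r \in Rb K -> ((cgen K r + N * mask K r) %/ N = mask K r)%N.
Proof.
move=> /Rb_ex [k ->]; have := hb2 k => lt.
by rewrite addnC mulnC divnMDl ?(leq_ltn_trans _ lt) // divn_small // addn0.
Qed.

Lemma val_mod r : r \in Rb K -> ((cgen K r + N * mask K r) %% N = cgen K r)%N.
Proof.
move=> /Rb_ex [k ->]; have := hb2 k => lt.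
by rewrite addnC mulnC modnMDl modn_small.
Qed.

Lemma blkA i j : (cblk K i == cblk K j) =
  has (fun t => (N <= t)%N && (odd (t %/ N %/ 2 ^ i) && odd (t %/ N %/ 2 ^ j))) (MS K w).
Proof.
rewrite hasMS.
rewrite (@eq_in_has _ _ (fun r => (cblk K i == r) && (cblk K j == r))); last first.
  by move=> r rR /=; rewrite val_div // !mask_bit.
apply/eqP/hasP => [e|[r _ /andP [/eqP -> /eqP ->]] //].
exists (cblk K i); first by rewrite mem_undup map_f ?mem_enum.
by rewrite e eqxx.
Qed.

Lemma genB i g : (cgen K (cblk K i) == g) =
  has (fun t => (N <= t)%N && (odd (t %/ N %/ 2 ^ i) && (t %% N == g))) (MS K w).
Proof.
rewrite hasMS.
rewrite (@eq_in_has _ _ (fun r => (cblk K i == r) && (cgen K r == g))); last first.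
  by move=> r rR /=; rewrite val_div // val_mod // !mask_bit.
apply/idP/hasP => [e|[r _ /andP [/eqP -> //]]].
exists (cblk K i); first by rewrite mem_undup map_f ?mem_enum.
by rewrite eqxx.
Qed.

Lemma closedC : [seq t <- MS K w | (t < N)%N] = cclosed K.
Proof.
rewrite filter_cat.
have -> : [seq t <- cclosed K | (t < N)%N] = cclosed K by apply/all_filterP/allP.
have -> : [seq t <- [seq (cgen K r + \sum_(k | cblk K k == r) w k)%N | r <- Rb K] | (t < N)%N] = [::].
  apply/eqP; rewrite -[_ == _]negbK -has_filter; apply/hasP => -[t /mapP [r rR ->]].
  by rewrite valE ltnNge val_ge.
by rewrite cats0.
Qed.

End Decode.

Lemma decode n m N (K L : cob n m) :
  (forall g, g \in cclosed K -> (g < N)%N) -> (forall k, (cgen K (cblk K k) < N)%N) ->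
  (forall g, g \in cclosed L -> (g < N)%N) -> (forall k, (cgen L (cblk L k) < N)%N) ->
  perm_eq (MS K (fun k => N * 2 ^ k)%N) (MS L (fun k => N * 2 ^ k)%N) -> cob_same K L.
Proof.
move=> k1 k2 l1 l2 pe; split.
- by move=> i j; rewrite (blkA k1 k2) (blkA l1 l2) (perm_has _ pe).
- move=> i; apply/eqP; rewrite eq_sym (genB l1 l2) -(perm_has _ pe) -(genB k1 k2).
  by rewrite eqxx.
- by rewrite -(closedC k1) -(closedC l1) perm_filter.
Qed.

Lemma in_sum (T : eqType) (s : seq T) (f : T -> nat) x : x \in s -> (f x <= \sum_(y <- s) f y)%N.
Proof.
elim: s => [//|a s IH]; rewrite inE big_cons => /orP [/eqP ->|/IH]; first exact: leq_addr.
by move/leq_trans; apply; rewrite leq_addl.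
Qed.

Lemma closedFA (F : fieldType) (d : nat) (A : frob F d) ks x y :
  FA A (closed_cob ks) x y = \prod_(g <- ks) cc A g.
Proof. by rewrite /FA /= enum_ord0 big_nil mulr1. Qed.

Theorem proposition4 (F : fieldType) (d : nat) (A : frob F d) (hd : (1 < d)%N)
    (n m : nat) (K L : cob n m) :
  ~ cob_same K L -> FA_eq A K L ->
  exists ks ls : seq nat,
    [/\ sorted geq ks, sorted geq ls, ks <> ls &
        FA_eq A (closed_cob ks) (closed_cob ls)].
Proof.
move=> nsame heq.
set N := (\sum_(g <- cclosed K) g + \sum_(g <- cclosed L) g
          + \sum_k cgen K (cblk K k) + \sum_k cgen L (cblk L k)).+1%N.
set w := fun k : 'I_(n+m) => (N * 2 ^ k)%N.
have tot : total geq by move=> a b; exact: leq_total.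
exists (sort geq (MS K w)), (sort geq (MS L w)); split.
- exact: sort_sorted.
- exact: sort_sorted.
- move=> eqs; apply: nsame; apply: (@decode n m N).
  + move=> g /(in_sum id) /= h; rewrite ltnS; apply: leq_trans h _; lia.
  + move=> k; have h : (cgen K (cblk K k) <= \sum_k0 cgen K (cblk K k0))%N.
      by rewrite (bigD1 k) //= leq_addr.
    rewrite ltnS; apply: leq_trans h _; lia.
  + move=> g /(in_sum id) /= h; rewrite ltnS; apply: leq_trans h _; lia.
  + move=> k; have h : (cgen L (cblk L k) <= \sum_k0 cgen L (cblk L k0))%N.
      by rewrite (bigD1 k) //= leq_addr.
    rewrite ltnS; apply: leq_trans h _; lia.
  + by rewrite -(perm_sort geq (MS K w)) eqs perm_sort.
- move=> x y.
  have pK : perm_eq (sort geq (MS K w)) (MS K w) by rewrite perm_sort.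
  have pL : perm_eq (sort geq (MS L w)) (MS L w) by rewrite perm_sort.
  rewrite !closedFA (perm_big _ pK) (perm_big _ pL) -!contract.
  by apply: eq_bigr => x' _; apply: eq_bigr => y' _; rewrite heq.
Qed.
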